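(* Let $T\subseteq\{0,1\}^n$ be nonempty, $\delta\in[0,1]$, $\varepsilon\ge0$, and let $f:\{0,1\}^n\to\mathbb{R}$ satisfy $f(x)=0$ for $x\notin T$ and $|f(x)|\le1+\varepsilon$ for $x\in T$. Define $\widetilde f(S):=\widehat f(S)\cdot 2^n/|T|$ for $S\subseteq[n]$. Then $$\sum_{S\subseteq[n]}\delta^{|S|}\,\widetilde f(S)^2\le(1+\varepsilon)^2\left(\frac{2^n}{|T|}\right)^{2\delta}.$$
   Context: Fourier coefficients: $\widehat f(S):=2^{-n}\sum_{x\in\{0,1\}^n}f(x)\chi_S(x)$ with $\chi_S(x)=(-1)^{\sum_{j\in S}x_j}$; the convention $0^0=1$ is used for $\delta=0$. *)

(* Defs.v *)
From mathcomp Require Import all_boot all_order all_algebra.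
From mathcomp Require Import all_classical all_reals all_analysis.
Set Implicit Arguments. Unset Strict Implicit. Unset Printing Implicit Defensive.
Import Order.TTheory GRing.Theory Num.Theory.
Local Open Scope ring_scope.

(* Boolean cube {0,1}^n as {ffun 'I_n -> bool}; true encodes 1. *)
Definition cube (n : nat) := {ffun 'I_n -> bool}.

Definition chi {R : realType} {n : nat} (S : {set 'I_n}) (x : cube n) : R :=
  (-1) ^+ (\sum_(j in S) (x j : nat))%N.

Definition fourier {R : realType} {n : nat} (f : cube n -> R) (S : {set 'I_n}) : R :=
  (2 ^+ n)^-1 * \sum_(x : cube n) f x * chi S x.

Definition ftilde {R : realType} {n : nat} (T : {set cube n}) (f : cube n -> R)
  (S : {set 'I_n}) : R :=
  fourier f S * (2 ^+ n / (#|T|)%:R).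

(* Main.v *)
Require Import Defs.
From mathcomp Require Import all_boot all_order all_algebra.
From mathcomp Require Import all_classical all_reals all_analysis.
From mathcomp Require Import ring lra.
Import Order.TTheory GRing.Theory Num.Theory.
Local Open Scope ring_scope.

Section Aux.
Variable R : realType.

Lemma bern (y r : R) : 0 <= y -> 0 <= r -> r <= 1 -> powR y r <= 1 + r * (y - 1).
Proof.
move=> y0 r0 r1.
have [->|rn0] := eqVneq r 0; first by rewrite powRr0 mul0r addr0.
have [->|yn0] := eqVneq y 0.
  rewrite powR0 // add0r; lra.
have yp : 0 < y by rewrite lt0r yn0 y0.
have := concave_ln (Itv01 r0 r1) yp ltr01.
rewrite !convRE /= ln1 mulr0 addr0 mulr1 /unstable.onem => H.
have pos : 0 < r * y + (1 - r).
  have [r1'|r1'] := eqVneq r 1; first by rewrite r1' mul1r subrr addr0.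
  have : 0 < 1 - r by rewrite subr_gt0 lt_neqAle r1' r1.
  have : 0 <= r * y by rewrite mulr_ge0.
  lra.
rewrite /powR (negbTE yn0).
apply: (le_trans (y := expR (ln (r * y + (1 - r))))).
  by rewrite ler_expR.
rewrite lnK; last by rewrite posrE.
lra.
Qed.

End Aux.

Section Aux.
Variable R : realType.

Lemma concR (l x y r : R) : 0 <= l <= 1 -> 0 <= x -> 0 <= y -> 0 <= r <= 1 ->
  l * powR x r + (1 - l) * powR y r <= powR (l * x + (1 - l) * y) r.
Proof.
move=> /andP[l0 l1] x0 y0 /andP[r0 r1].
have [->|rn0] := eqVneq r 0; first by rewrite !powRr0; lra.
set w := l * x + (1 - l) * y.
have lx0 : 0 <= l * x by rewrite mulr_ge0.
have ly0 : 0 <= (1 - l) * y by rewrite mulr_ge0 // subr_ge0.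
have [w0|wn0] := eqVneq w 0.
  rewrite w0 powR0 //.
  have e1 : l * powR x r = 0.
    have [->|ln0] := eqVneq l 0; first by rewrite mul0r.
    have : l * x = 0 by move: w0; rewrite /w; lra.
    by move/eqP; rewrite mulf_eq0 (negbTE ln0) /= => /eqP ->; rewrite powR0 // mulr0.
  have e2 : (1 - l) * powR y r = 0.
    have [->|ln0] := eqVneq (1 - l) 0; first by rewrite mul0r.
    have : (1 - l) * y = 0 by move: w0; rewrite /w; lra.
    by move/eqP; rewrite mulf_eq0 (negbTE ln0) /= => /eqP ->; rewrite powR0 // mulr0.
  by rewrite e1 e2 addr0.
have wp : 0 < w by rewrite lt0r wn0 /w addr_ge0.
have key (z : R) : 0 <= z -> powR z r <= powR w r * (1 + r * (z / w - 1)).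
  move=> z0; rewrite -{1}(divfK wn0 z) (powRM _ (divr_ge0 z0 (ltW wp)) (ltW wp)) mulrC.
  rewrite ler_pM2l ?powR_gt0 //.
  exact: bern (divr_ge0 _ (ltW _)) r0 r1.
have H1 := key x x0; have H2 := key y y0.
have pw : 0 <= powR w r by apply: powR_ge0.
apply: (le_trans (y := l * (powR w r * (1 + r * (x / w - 1))) +
                      (1 - l) * (powR w r * (1 + r * (y / w - 1))))).
  apply: lerD; apply: ler_wpM2l => //; lra.
have E : l * (x / w) + (1 - l) * (y / w) = 1 by rewrite !mulrA -mulrDl divff.
rewrite le_eqVlt; apply/orP; left; apply/eqP.
transitivity (powR w r * (1 + r * ((l * (x / w) + (1 - l) * (y / w)) - 1))).
  ring.
by rewrite E subrr mulr0 addr0 mulr1.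
Qed.

End Aux.

Section Aux.
Variable R : realType.

Lemma powRK (a r : R) : 0 <= a -> r != 0 -> powR (powR a (r^-1)) r = a.
Proof. by move=> a0 rn0; rewrite -powRrM mulVf // powRr1. Qed.

Lemma powRK' (a r : R) : 0 <= a -> r != 0 -> powR (powR a r) (r^-1) = a.
Proof. by move=> a0 rn0; rewrite -powRrM mulfV // powRr1. Qed.

Lemma powR_divK (z t r : R) : 0 <= z -> 0 < t -> powR (z / t) r * powR t r = powR z r.
Proof.
move=> z0 t0; rewrite -powRM ?divr_ge0 ?(ltW t0) //.
by rewrite divfK // gt_eqF.
Qed.

Lemma powR_mono (r x y : R) : 0 <= r -> 0 <= x -> x <= y -> powR x r <= powR y r.
Proof.
move=> r0 x0 xy; apply: ge0_ler_powR => //; rewrite nnegrE //.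
exact: le_trans xy.
Qed.

Definition psi {I : finType} (c r : R) (G : I -> R) :=
  powR (c * \sum_i powR (G i) r) (r^-1).

Lemma revMink (I : finType) (c r : R) (G H : I -> R) :
  0 < c -> 0 < r <= 1 -> (forall i, 0 <= G i) -> (forall i, 0 <= H i) ->
  psi c r G + psi c r H <= psi c r (fun i => G i + H i).
Proof.
move=> c0 /andP[r0 r1] G0 H0.
have rn0 : r != 0 by rewrite gt_eqF.
have ri0 : 0 <= r^-1 by rewrite invr_ge0 ltW.
have sG : 0 <= c * \sum_i powR (G i) r.
  by apply: mulr_ge0; [exact: ltW | apply: sumr_ge0 => i _; apply: powR_ge0].
have sH : 0 <= c * \sum_i powR (H i) r.
  by apply: mulr_ge0; [exact: ltW | apply: sumr_ge0 => i _; apply: powR_ge0].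
have sGH : 0 <= c * \sum_i powR (G i + H i) r.
  by apply: mulr_ge0; [exact: ltW | apply: sumr_ge0 => i _; apply: powR_ge0].
have A0 : 0 <= psi c r G by apply: powR_ge0.
have B0 : 0 <= psi c r H by apply: powR_ge0.
have monoG : psi c r G <= psi c r (fun i => G i + H i).
  apply: powR_mono => //; rewrite ler_pM2l //; apply: ler_sum => i _.
  by apply: powR_mono; [exact: ltW | exact: G0 | rewrite lerDl].
have monoH : psi c r H <= psi c r (fun i => G i + H i).
  apply: powR_mono => //; rewrite ler_pM2l //; apply: ler_sum => i _.
  by apply: powR_mono; [exact: ltW | exact: H0 | rewrite lerDr].
have PA : powR (psi c r G) r = c * \sum_i powR (G i) r by rewrite /psi powRK.
have PB : powR (psi c r H) r = c * \sum_i powR (H i) r by rewrite /psi powRK.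
have fin W : 0 <= W -> powR W r <= c * \sum_i powR (G i + H i) r ->
    W <= psi c r (fun i => G i + H i).
  move=> W0 WP; rewrite -(@powRK' W r W0 rn0) /psi; apply: powR_mono => //; exact: powR_ge0.
move: A0 B0 monoG monoH PA PB fin.
generalize (psi c r G) (psi c r H) (psi c r (fun i => G i + H i)).
move=> A B S A0 B0 monoG monoH PA PB fin.
have [A0'|An0] := eqVneq A 0.
  rewrite A0' add0r; exact: monoH.
have [B0'|Bn0] := eqVneq B 0.
  rewrite B0' addr0; exact: monoG.
have Ap : 0 < A by rewrite lt0r An0 A0.
have Bp : 0 < B by rewrite lt0r Bn0 B0.
set W := A + B.
have Wp : 0 < W by apply: addr_gt0.
have nG : c * \sum_i powR (G i / A) r = 1.
  apply: (mulIf (x := powR A r)); first by rewrite gt_eqF // powR_gt0.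
  rewrite mul1r -mulrA mulr_suml.
  under eq_bigr => i _ do rewrite powR_divK //.
  by rewrite PA.
have nH : c * \sum_i powR (H i / B) r = 1.
  apply: (mulIf (x := powR B r)); first by rewrite gt_eqF // powR_gt0.
  rewrite mul1r -mulrA mulr_suml.
  under eq_bigr => i _ do rewrite powR_divK //.
  by rewrite PB.
have l01 : 0 <= A / W <= 1.
  apply/andP; split; first exact: divr_ge0 A0 (ltW Wp).
  by rewrite ler_pdivrMr // mul1r lerDl.
have pt i : A / W * powR (G i / A) r + (1 - A / W) * powR (H i / B) r
            <= powR ((G i + H i) / W) r.
  have E : (G i + H i) / W = A / W * (G i / A) + (1 - A / W) * (H i / B).
    have -> : 1 - A / W = B / W by rewrite /W; field; rewrite gt_eqF.
    by field; rewrite !gt_eqF.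
  rewrite E; apply: concR => //.
  - exact: divr_ge0 (G0 i) A0.
  - exact: divr_ge0 (H0 i) B0.
  - by rewrite (ltW r0) r1.
have sum1 : 1 <= c * \sum_i powR ((G i + H i) / W) r.
  have -> : (1 : R) = A / W * (c * \sum_i powR (G i / A) r) +
                 (1 - A / W) * (c * \sum_i powR (H i / B) r).
    by rewrite nG nH; ring.
  rewrite !mulr_sumr -big_split /= ler_sum // => i _.
  rewrite !mulrA -!(mulrC c) -!mulrA -mulrDr ler_pM2l //.
  by rewrite mulrA; exact: pt.
apply: fin; first exact: ltW.
move: sum1; rewrite mulr_sumr.
have -> : \sum_i c * powR ((G i + H i) / W) r =
          (c * \sum_i powR (G i + H i) r) / powR W r.
  rewrite mulr_sumr mulr_suml; apply: eq_bigr => i _.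
  rewrite -(@powR_divK _ _ r (addr_ge0 (G0 i) (H0 i)) Wp).
  by field; rewrite gt_eqF // powR_gt0.
by rewrite ler_pdivlMr ?powR_gt0 // mul1r.
Qed.

End Aux.

Section Aux.
Variable R : realType.

Lemma d_aff (a b u : R) : is_derive u 1 (fun v : R => a + b * v) b.
Proof.
have -> : (fun v : R => a + b * v) = cst a + b \*: id.
  by apply/funext => v /=.
apply: is_derive_eq.
by rewrite add0r; apply: mulr1.
Qed.

Lemma d_powR_aff (a b p u : R) : 0 < a + b * u ->
  is_derive u 1 (fun v => powR (a + b * v) p) (p * powR (a + b * u) (p - 1) * b).
Proof.
move=> h.
have -> : (fun v => powR (a + b * v) p) = (@powR R ^~ p) \o (fun v => a + b * v) by [].
apply: is_derive1_comp; last exact: d_aff.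
exact: is_derive1_powR.
Qed.

End Aux.

Section Aux2.
Variable R : realType.

Lemma amgm (u v e : R) : 0 < u -> 0 < v -> u * v <= 1 -> e <= 0 ->
  2 <= powR u e + powR v e.
Proof.
move=> u0 v0 uv1 e0.
have sq (w : R) : 0 < w -> powR w e = powR w (e / 2) ^+ 2.
  move=> w0; rewrite -powR_mulrn ?powR_ge0 // -powRrM.
  by congr (powR w _); rewrite mulrC mulrA mulrC mulrA mulVf ?mul1r // pnatr_eq0.
rewrite (sq u u0) (sq v v0).
have XY : 1 <= powR u (e / 2) * powR v (e / 2).
  rewrite -powRM; [|exact: ltW|exact: ltW].
  have : 0 < u * v <= 1 by rewrite mulr_gt0.
  move/ger_powR => H.
  rewrite -{1}(powRr0 (u * v)); apply: H.
  by rewrite pmulr_lle0 // invr_gt0 ltr0n.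
set X := powR u (e / 2) in XY *; set Y := powR v (e / 2) in XY *.
have : 0 <= (X - Y) ^+ 2 by apply: sqr_ge0.
nra.
Qed.

Lemma Gpos (s c : R) : 0 <= s <= 1 -> 0 <= c < 1 ->
  2 * s * c <= powR (1 + c) s - powR (1 - c) s.
Proof.
move=> /andP[s0 s1] /andP[c0 c1].
have [->|cn0] := eqVneq c 0.
  by rewrite mulr0 addr0 subr0 subrr.
have cp : 0 < c by rewrite lt0r cn0 c0.
pose f := (fun v => powR (1 + 1 * v) s) - (fun v => powR (1 + (-1) * v) s)
          - (fun v : R => 0 + (2 * s) * v).
pose df := fun x : R => s * powR (1 + 1 * x) (s - 1) * 1 - s * powR (1 + (-1) * x) (s - 1) * (-1) - 2 * s.
have der x : 0 <= x <= c -> is_derive x 1 f (df x).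
  move=> /andP[x0 xc].
  apply: is_deriveB; last exact: d_aff.
  apply: is_deriveB; apply: d_powR_aff; lra.
have [x xi E] : exists2 x, x \in `]0, c[ & f c - f 0 = df x * (c - 0).
  apply: MVT => //.
    by move=> x; rewrite in_itv /= => /andP[x0 xc]; apply: der; rewrite (ltW x0) (ltW xc).
  apply: derivable_within_continuous => x; rewrite in_itv /= => /andP[x0 xc].
  by apply: ex_derive; apply: der; rewrite x0 xc.
move: xi; rewrite in_itv /= => /andP[x0 xc].
have dfx : 0 <= df x.
  have := @amgm (1 + 1 * x) (1 + (-1) * x) (s - 1).
  have h1 : 0 < 1 + 1 * x by lra.
  have h2 : 0 < 1 + (-1) * x by lra.
  have h3 : (1 + 1 * x) * (1 + (-1) * x) <= 1 by nra.
  have h4 : s - 1 <= 0 by lra.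
  move=> /(_ h1 h2 h3 h4) H.
  rewrite /df; nra.
have Ef v : f v = powR (1 + 1 * v) s - powR (1 + (-1) * v) s - (0 + 2 * s * v) by [].
have h := mulr_ge0 dfx (ltW cp).
move: E; rewrite !Ef !mulr0 !addr0 powR1 subrr sub0r !subr0 !mul1r !mulN1r.
lra.
Qed.
End Aux2.

Section Aux.
Variable R : realType.

Lemma d_sq (k u : R) : is_derive u 1 (fun v : R => 0 + k * v ^+ 2) (2 * k * u).
Proof.
have -> : (fun v : R => 0 + k * v ^+ 2) = cst 0 + k \*: ((id : R -> R) * id).
  by apply/funext => v /=.
apply: is_derive_eq.
transitivity (0 + k * (u * 1 + u * 1)); first by [].
ring.
Qed.

Lemma Fpos (s t : R) : 0 <= s <= 1 -> 0 <= t < 1 ->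
  2 + (1 + s) * s * t ^+ 2 <= powR (1 + t) (1 + s) + powR (1 - t) (1 + s).
Proof.
move=> /andP[s0 s1] /andP[t0 t1].
have [->|tn0] := eqVneq t 0.
  rewrite addr0 subr0 powR1 expr0n /= mulr0 addr0; lra.
have tp : 0 < t by rewrite lt0r tn0 t0.
set p := 1 + s.
pose f := (fun v => powR (1 + 1 * v) p) + (fun v => powR (1 + (-1) * v) p)
          - (fun v : R => 0 + (p * s) * v ^+ 2).
pose df := fun x : R => p * powR (1 + 1 * x) (p - 1) * 1 + p * powR (1 + (-1) * x) (p - 1) * (-1) - 2 * (p * s) * x.
have der x : 0 <= x <= t -> is_derive x 1 f (df x).
  move=> /andP[x0 xc].
  apply: is_deriveB; last exact: d_sq.
  apply: is_deriveD; apply: d_powR_aff; lra.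
have [x xi E] : exists2 x, x \in `]0, t[ & f t - f 0 = df x * (t - 0).
  apply: MVT => //.
    by move=> x; rewrite in_itv /= => /andP[x0 xc]; apply: der; rewrite (ltW x0) (ltW xc).
  apply: derivable_within_continuous => x; rewrite in_itv /= => /andP[x0 xc].
  by apply: ex_derive; apply: der; rewrite x0 xc.
move: xi; rewrite in_itv /= => /andP[x0 xc].
have dfx : 0 <= df x.
  have G := @Gpos R s x.
  have h1 : 0 <= s <= 1 by rewrite s0 s1.
  have h2 : 0 <= x < 1 by rewrite (ltW x0) (lt_trans xc t1).
  move: (G h1 h2) => {}G.
  have -> : df x = p * (powR (1 + x) s - powR (1 - x) s - 2 * s * x).
    rewrite /df /p !mul1r !mulN1r.
    have -> : 1 + s - 1 = s by ring.
    ring.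
  apply: mulr_ge0; first by rewrite /p; lra.
  lra.
have h := mulr_ge0 dfx (ltW tp).
have Ef v : f v = powR (1 + 1 * v) p + powR (1 + (-1) * v) p - (0 + p * s * v ^+ 2) by [].
move: E; rewrite !Ef !mulr0 !addr0 powR1 expr0n /= mulr0 !subr0 !mul1r !mulN1r.
lra.
Qed.

Lemma Fall (s t : R) : 0 <= s <= 1 -> 0 <= t <= 1 ->
  2 + (1 + s) * s * t ^+ 2 <= powR (1 + t) (1 + s) + powR (1 - t) (1 + s).
Proof.
move=> hs /andP[t0 t1].
have [->|tn1] := eqVneq t 1; last first.
  by apply: Fpos => //; rewrite t0 lt_neqAle tn1 t1.
move: hs => /andP[s0 s1].
rewrite expr1n mulr1 subrr powR0; last by rewrite gt_eqF //; lra.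
rewrite addr0.
set k := (1 + s) * s.
have k0 : 0 <= k by rewrite /k; nra.
have k2 : k <= 2 by rewrite /k; nra.
rewrite leNgt; apply/negP => HD.
set D := 2 + k - powR (1 + 1) (1 + s).
have Dp : 0 < D by rewrite /D; lra.
set m := D / (D + 10).
have D10 : 0 < D + 10 by lra.
have mE : m * (D + 10) = D by rewrite /m divfK // gt_eqF.
have mp : 0 < m by rewrite /m divr_gt0.
have m1 : m < 1 by rewrite /m ltr_pdivrMr // mul1r; lra.
have := @Fpos s (1 - m).
have h1 : 0 <= s <= 1 by rewrite s0 s1.
have h2 : 0 <= 1 - m < 1 by apply/andP; split; lra.
move=> /(_ h1 h2).
have -> : 1 - (1 - m) = m by ring.
have P1 : powR (1 + (1 - m)) (1 + s) <= powR (1 + 1) (1 + s).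
  apply: powR_mono; lra.
have P2 : powR m (1 + s) <= m.
  apply: ge1r_powR; first by rewrite mp (ltW m1).
  lra.
rewrite -/k => H.
have Hk : k * (1 - m) ^+ 2 >= k * (1 - 2 * m) by apply: ler_wpM2l => //; nra.
have km : k * m <= 2 * m by apply: ler_wpM2r => //; exact: ltW.
have mD : 0 <= m * D by apply: mulr_ge0; apply: ltW.
move: HD; rewrite -/D => HD.
have HD2 : D = 2 + k - powR (1 + 1) (1 + s) by [].
lra.
Qed.

End Aux.

Section Aux.
Variable R : realType.

Lemma sqpow (d r x : R) : 2 * r = 1 + d -> 0 <= x -> powR (x ^+ 2) r = powR x (1 + d).
Proof.
by move=> r2 x0; rewrite -powR_mulrn // -powRrM r2.
Qed.

Lemma TP1 (d r u : R) : 0 <= d -> d <= 1 -> 2 * r = 1 + d -> 0 <= u <= 1 ->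
  powR (1 + d * u ^+ 2) r <= (powR ((1 + u) ^+ 2) r + powR ((1 - u) ^+ 2) r) / 2.
Proof.
move=> d0 d1 r2 /andP[u0 u1].
rewrite !(@sqpow d r _ r2); [|lra|lra].
have := @Fall R d u; rewrite d0 d1 u0 u1 => /(_ isT isT) H.
have B := @bern R (1 + d * u ^+ 2) r.
have h1 : 0 <= 1 + d * u ^+ 2 := addr_ge0 ler01 (mulr_ge0 d0 (sqr_ge0 u)).
have h2 : 0 <= r by lra.
have h3 : r <= 1 by lra.
move: (B h1 h2 h3) => {}B.
apply: (le_trans B).
have e : 1 + r * (1 + d * u ^+ 2 - 1) = 1 + (2 * r) * d * u ^+ 2 / 2 by field.
rewrite e r2.
lra.
Qed.

Lemma TP2 (d r t : R) : 0 <= d -> d <= 1 -> 2 * r = 1 + d -> t ^+ 2 <= 1 ->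
  powR (1 + d * t ^+ 2) r <= (powR ((1 + t) ^+ 2) r + powR ((1 - t) ^+ 2) r) / 2.
Proof.
move=> d0 d1 r2 t1.
have [t0|t0] := leP 0 t.
  apply: TP1 => //; rewrite t0 /=; nra.
have := @TP1 d r (- t) d0 d1 r2.
have h : 0 <= - t <= 1 by apply/andP; split; nra.
move=> /(_ h); rewrite sqrrN opprK => H; apply: (le_trans H).
by rewrite [X in X / 2]addrC.
Qed.

Lemma TP3 (d r a b : R) : 0 <= d -> d <= 1 -> 2 * r = 1 + d -> b ^+ 2 <= a ^+ 2 ->
  powR (a ^+ 2 + d * b ^+ 2) r <= (powR ((a + b) ^+ 2) r + powR ((a - b) ^+ 2) r) / 2.
Proof.
move=> d0 d1 r2 ba.
have rn0 : r != 0 by rewrite gt_eqF //; lra.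
have [a0|an0] := eqVneq a 0.
  have : b ^+ 2 = 0 by move: ba; rewrite a0 expr0n /=; have := sqr_ge0 b; lra.
  move/eqP; rewrite sqrf_eq0 => /eqP ->.
  rewrite a0 expr0n /= mulr0 addr0 powR0 //.
have a2 : 0 < a ^+ 2 by rewrite exprn_even_gt0.
set t := b / a.
have bE : b = a * t by rewrite /t mulrC divfK.
have t1 : t ^+ 2 <= 1.
  by move: ba; rewrite bE exprMn -{2}(mulr1 (a ^+ 2)) ler_pM2l.
have e1 : a ^+ 2 + d * b ^+ 2 = a ^+ 2 * (1 + d * t ^+ 2) by rewrite bE; ring.
have e2 : (a + b) ^+ 2 = a ^+ 2 * (1 + t) ^+ 2 by rewrite bE; ring.
have e3 : (a - b) ^+ 2 = a ^+ 2 * (1 - t) ^+ 2 by rewrite bE; ring.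
have h1 : 0 <= 1 + d * t ^+ 2 := addr_ge0 ler01 (mulr_ge0 d0 (sqr_ge0 t)).
rewrite e1 e2 e3 (powRM r (sqr_ge0 a) h1) (powRM r (sqr_ge0 a) (sqr_ge0 (1 + t))).
rewrite (powRM r (sqr_ge0 a) (sqr_ge0 (1 - t))).
have := @TP2 d r t d0 d1 r2 t1.
have P : 0 <= powR (a ^+ 2) r by apply: powR_ge0.
move=> H.
have := ler_wpM2l P H.
by rewrite -mulrDr -mulrA.
Qed.

Lemma TP (d r a b : R) : 0 <= d -> d <= 1 -> 2 * r = 1 + d ->
  powR (a ^+ 2 + d * b ^+ 2) r <= (powR ((a + b) ^+ 2) r + powR ((a - b) ^+ 2) r) / 2.
Proof.
move=> d0 d1 r2.
have [ba|ab] := leP (b ^+ 2) (a ^+ 2); first exact: TP3.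
have := @TP3 d r b a d0 d1 r2 (ltW ab).
have -> : (b - a) ^+ 2 = (a - b) ^+ 2 by ring.
rewrite [b + a]addrC => H; apply: le_trans H.
apply: powR_mono; first lra.
  exact: addr_ge0 (sqr_ge0 _) (mulr_ge0 d0 (sqr_ge0 _)).
nra.
Qed.

End Aux.

Section Cube.
Variable R : realType.

Definition ext {n : nat} (b : bool) (x : cube n) : cube n.+1 :=
  [ffun i : 'I_n.+1 => if unlift ord0 i is Some j then x j else b].

Lemma ext0 n b (x : cube n) : ext b x ord0 = b.
Proof. by rewrite ffunE unlift_none. Qed.

Lemma ext_lift n b (x : cube n) j : ext b x (lift ord0 j) = x j.
Proof. by rewrite ffunE liftK. Qed.

Definition unext {n : nat} (y : cube n.+1) : bool * cube n :=
  (y ord0, [ffun j => y (lift ord0 j)]).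

Lemma sum_cubeS n (F : cube n.+1 -> R) :
  \sum_(y : cube n.+1) F y = \sum_(b : bool) \sum_(x : cube n) F (ext b x).
Proof.
rewrite pair_big /=.
rewrite (reindex (fun p : bool * cube n => ext p.1 p.2)) //.
exists (@unext n).
  move=> [b x] _; rewrite /unext ext0; congr (_, _).
  by apply/ffunP => j; rewrite ffunE ext_lift.
move=> y _; apply/ffunP => i; rewrite /unext /= ffunE.
case: unliftP => [j ->|->] //.
by rewrite ffunE.
Qed.

Definition sg (b : bool) : R := (-1) ^+ (b : nat).

Definition ker (d : R) {n} (x y : cube n) : R :=
  \prod_(i : 'I_n) (1 + d * (sg (x i) * sg (y i))).

Definition Q (d : R) {n} (f : cube n -> R) : R :=
  \sum_x \sum_y f x * f y * ker d x y.

Definition Nk (d : R) {n} (f : cube n -> R) : R := ((2 ^+ n)^-1) ^+ 2 * Q d f.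

Lemma kerS d n b c (x y : cube n) :
  ker d (ext b x) (ext c y) = (1 + d * (sg b * sg c)) * ker d x y.
Proof.
rewrite /ker big_ord_recl ext0 ext0; congr (_ * _).
by apply: eq_bigr => j _; rewrite !ext_lift.
Qed.

Lemma chi_sg n S (x : cube n) : chi S x = \prod_(i in S) sg (x i) :> R.
Proof. by rewrite /chi /sg prodrXr. Qed.

Lemma ker_sum d n (x y : cube n) :
  \sum_(S : {set 'I_n}) d ^+ #|S| * (chi S x * chi S y) = ker d x y.
Proof.
rewrite /ker (eq_bigr (fun i => d * (sg (x i) * sg (y i)) + 1)); last first.
  by move=> i _; rewrite addrC.
rewrite bigA_distr.
apply: eq_bigr => S _.
rewrite -big_mkcond /= big_split /= prodr_const.
by rewrite big_split /= -!chi_sg.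
Qed.

Lemma sq_sum (I : finType) (a : I -> R) :
  (\sum_i a i) ^+ 2 = \sum_i \sum_j a i * a j.
Proof. by rewrite expr2 big_distrlr. Qed.

Lemma fourier_Nk d n (f : cube n -> R) :
  \sum_(S : {set 'I_n}) d ^+ #|S| * (fourier f S) ^+ 2 = Nk d f.
Proof.
rewrite /Nk /Q /fourier.
under eq_bigr => S _ do rewrite exprMn sq_sum.
set c := (2 ^+ n)^-1 ^+ 2.
transitivity (c * \sum_(S : {set 'I_n}) \sum_x \sum_y
    d ^+ #|S| * (f x * chi S x * (f y * chi S y))).
  rewrite mulr_sumr; apply: eq_bigr => S _; rewrite mulrCA; congr (_ * _).
  rewrite mulr_sumr; apply: eq_bigr => x _; by rewrite mulr_sumr.
congr (_ * _); rewrite exchange_big; apply: eq_bigr => x _.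
rewrite exchange_big; apply: eq_bigr => y _.
rewrite -ker_sum mulr_sumr; apply: eq_bigr => S _.
ring.
Qed.

Definition gpart {n} (f : cube n.+1 -> R) (x : cube n) : R :=
  (f (ext false x) + f (ext true x)) / 2.
Definition hpart {n} (f : cube n.+1 -> R) (x : cube n) : R :=
  (f (ext false x) - f (ext true x)) / 2.

Lemma QS d n (f : cube n.+1 -> R) :
  Q d f = 4 * (Q d (gpart f) + d * Q d (hpart f)).
Proof.
rewrite /Q sum_cubeS.
under eq_bigr => b _ do under eq_bigr => x _ do rewrite sum_cubeS.
rewrite exchange_big /=.
transitivity (\sum_x \sum_y 4 * (gpart f x * gpart f y + d * (hpart f x * hpart f y)) * ker d x y).
  apply: eq_bigr => x _.
  under eq_bigr => b _ do rewrite exchange_big /=.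
  rewrite exchange_big /=; apply: eq_bigr => y _.
  rewrite !big_bool /= !kerS /sg /gpart /hpart /=.
  by rewrite !expr0 !expr1; field.
symmetry; rewrite mulrDr mulrA !mulr_sumr -big_split /=; apply: eq_bigr => x _.
rewrite !mulr_sumr -big_split /=; apply: eq_bigr => y _.
ring.
Qed.

End Cube.

Arguments psi {R I}.
Arguments sg {R}.
Arguments ker {R} d {n}.
Arguments Q {R} d {n}.
Arguments Nk {R} d {n}.
Arguments gpart {R n}.
Arguments hpart {R n}.

Section Hyper.
Variable R : realType.

Lemma sum_cube0 (F : cube 0 -> R) : \sum_(x : cube 0) F x = F [ffun i => false].
Proof.
rewrite (big_pred1 [ffun i => false]) // => x /=.
by apply/esym/eqP/ffunP => -[].
Qed.

Lemma scale_psi (I : finType) (c r d : R) (G : I -> R) :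
  0 <= c -> 0 < r -> 0 <= d -> (forall i, 0 <= G i) ->
  psi c r (fun i => d * G i) = d * psi c r G.
Proof.
move=> c0 r0 d0 G0; rewrite /psi.
under eq_bigr => i _ do rewrite (powRM r d0 (G0 i)).
rewrite -mulr_sumr mulrCA.
have S0 : 0 <= c * \sum_i powR (G i) r.
  by apply: mulr_ge0 => //; apply: sumr_ge0 => i _; apply: powR_ge0.
rewrite (powRM _ (powR_ge0 d r) S0).
by rewrite powRK' // gt_eqF.
Qed.

Lemma hyper (d r : R) : 0 <= d -> d <= 1 -> 2 * r = 1 + d -> forall n (f : cube n -> R),
  Nk d f <= powR ((2 ^+ n)^-1 * \sum_x powR (f x ^+ 2) r) (r^-1).
Proof.
move=> d0 d1 r2.
have r0 : 0 < r by lra.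
have r1 : r <= 1 by lra.
have rn0 : r != 0 by rewrite gt_eqF.
elim=> [|n IH] f.
  rewrite /Nk /Q !sum_cube0 /ker big_ord0 expr0 invr1 !mul1r mulr1 -expr2.
  by rewrite expr1n mul1r powRK' ?sqr_ge0.
have c0 : 0 < (2 ^+ n : R)^-1 by rewrite invr_gt0 exprn_gt0.
have E : Nk d f = Nk d (gpart f) + d * Nk d (hpart f).
  rewrite /Nk QS [(2 : R) ^+ n.+1]exprS.
  have tn0 : (2 ^+ n : R) != 0 by rewrite expf_neq0 // pnatr_eq0.
  have key (t A B : R) : t != 0 ->
      (2 * t)^-1 ^+ 2 * (4 * (A + d * B)) = t^-1 ^+ 2 * A + d * (t^-1 ^+ 2 * B).
    by move=> h; field.
  exact: key.
rewrite E.
apply: (le_trans (y := psi (2 ^+ n)^-1 r (fun x => gpart f x ^+ 2) +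
                       psi (2 ^+ n)^-1 r (fun x => d * hpart f x ^+ 2))).
  rewrite scale_psi; [|exact: ltW c0|exact: r0|exact: d0|by move=> x; apply: sqr_ge0].
  apply: lerD; first exact: IH.
  by apply: ler_wpM2l => //; exact: IH.
apply: (le_trans (@revMink R _ _ _ (fun x => gpart f x ^+ 2)
                      (fun x => d * hpart f x ^+ 2) c0 _ _ _)).
- by rewrite r0 r1.
- by move=> x; exact: sqr_ge0.
- by move=> x; exact: mulr_ge0 d0 (sqr_ge0 _).
rewrite /psi; apply: powR_mono.
- by rewrite invr_ge0 ltW.
- apply: mulr_ge0; first exact: ltW.
  by apply: sumr_ge0 => x _; apply: powR_ge0.
have RHSe : (2 ^+ n.+1)^-1 * \sum_y powR (f y ^+ 2) r =
    (2 ^+ n)^-1 * \sum_x (powR (f (ext true x) ^+ 2) r + powR (f (ext false x) ^+ 2) r) / 2.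
  rewrite sum_cubeS big_bool /= -big_split /= [(2 : R) ^+ n.+1]exprS.
  have key (t A : R) : t != 0 -> (2 * t)^-1 * A = t^-1 * A / 2.
    by move=> h; field.
  rewrite key; last by rewrite expf_neq0 // pnatr_eq0.
  by rewrite -mulrA mulr_suml.
rewrite RHSe.
apply: ler_wpM2l; first exact: ltW.
apply: ler_sum => x _.
have := @TP R d r (gpart f x) (hpart f x) d0 d1 r2.
have -> : gpart f x + hpart f x = f (ext false x) by rewrite /gpart /hpart; field.
have -> : gpart f x - hpart f x = f (ext true x) by rewrite /gpart /hpart; field.
by rewrite [X in _ -> _ <= X / 2]addrC.
Qed.

End Hyper.

Arguments Nk {R} d {n}.

Theorem mainTheorem5 (R : realType) (n : nat) (T : {set cube n})
  (delta eps : R) (f : cube n -> R) :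
  T != finset.set0 ->
  0 <= delta <= 1 ->
  0 <= eps ->
  (forall x, x \notin T -> f x = 0) ->
  (forall x, x \in T -> `|f x| <= 1 + eps) ->
  \sum_(S : {set 'I_n}) delta ^+ #|S| * (ftilde T f S) ^+ 2
    <= (1 + eps) ^+ 2 * powR (2 ^+ n / (#|T|)%:R) (2 * delta).
Proof.
move=> Tn0 /andP[d0 d1] e0 fout fin.
set r := (1 + delta) / 2.
have r2 : 2 * r = 1 + delta by rewrite /r mulrC divfK // pnatr_eq0.
have r0 : 0 < r by move: r2; clearbody r => r2; lra.
have rn0 : r != 0 by rewrite gt_eqF.
set K := 2 ^+ n / (#|T|)%:R.
have Tpos : (0 < #|T|)%N by rewrite card_gt0.
have Tle : (#|T| <= 2 ^ n)%N.
  have := max_card T; rewrite card_ffun card_bool card_ord.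
  by [].
have TposR : 0 < (#|T|)%:R :> R by rewrite ltr0n.
have twon : 0 < 2 ^+ n :> R by rewrite exprn_gt0.
have K1 : 1 <= K.
  rewrite /K ler_pdivlMr // mul1r -natrX ler_nat.
  exact: Tle.
have Kp : 0 < K by lra.
have L : \sum_(S : {set 'I_n}) delta ^+ #|S| * (ftilde T f S) ^+ 2
         = K ^+ 2 * Nk delta f.
  rewrite -fourier_Nk mulr_sumr; apply: eq_bigr => S _.
  rewrite /ftilde -/K exprMn; ring.
rewrite L.
set M := powR ((1 + eps) ^+ 2) r.
have M0 : 0 <= M by apply: powR_ge0.
have Sb : \sum_x powR (f x ^+ 2) r <= (#|T|)%:R * M.
  rewrite mulr_natl -sumr_const [X in _ <= X]big_mkcond /=.
  apply: ler_sum => x _.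
  case: ifP => xT.
    apply: powR_mono; first exact: ltW.
      exact: sqr_ge0.
    have := fin x xT; rewrite ler_norml => /andP[h1 h2].
    nra.
  by rewrite fout ?xT // expr0n /= powR0.
have H := @hyper R delta r d0 d1 r2 n f.
have ri0 : 0 <= r^-1 by rewrite invr_ge0 ltW.
have H2 : Nk delta f <= powR (K^-1 * M) r^-1.
  apply: (le_trans H); apply: powR_mono => //.
    apply: mulr_ge0; first by rewrite invr_ge0 ltW.
    by apply: sumr_ge0 => x _; apply: powR_ge0.
  have -> : K^-1 * M = (2 ^+ n)^-1 * ((#|T|)%:R * M).
    by rewrite /K invf_div mulrA [(2 ^+ n)^-1 * _]mulrC.
  by apply: ler_wpM2l => //; rewrite invr_ge0 ltW.
have Ki0 : 0 <= K^-1 by rewrite invr_ge0 ltW.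
rewrite (powRM _ Ki0 M0) /M powRK' // ?sqr_ge0 // in H2.
have H3 : K ^+ 2 * Nk delta f <= K ^+ 2 * (powR K^-1 r^-1 * (1 + eps) ^+ 2).
  by apply: ler_wpM2l => //; apply: sqr_ge0.
apply: (le_trans H3).
rewrite mulrA mulrC; apply: ler_wpM2l; first exact: sqr_ge0.
have -> : K ^+ 2 = powR K 2%:R by rewrite powR_mulrn // ltW.
rewrite -(powR_inv1 (ltW Kp)) -powRrM -powRD; last by apply/implyP => _; rewrite gt_eqF.
apply: ler_powR => //.
have -> : r^-1 = 2 / (1 + delta) by rewrite /r invf_div.
have hp : 0 < 1 + delta by lra.
have : 2 - 2 * delta <= 2 / (1 + delta).
  rewrite ler_pdivlMr //; nra.
lra.
Qed.
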